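(* Let $0<\gamma<\delta<1$ and set $\beta=\sqrt{1-\delta^2}$. Then there exists a constant $C>0$, depending only on $\gamma$ and $\delta$, such that for every positive real number $m$, \[J_m(\gamma m)<C\left(\frac{\gamma}{\delta}\right)^{\beta m}J_m(\delta m).\]
   Context: $J_m$ denotes the Bessel function of the first kind of order $m$, i.e. the solution of $x^2J_m''(x)+xJ_m'(x)+(x^2-m^2)J_m(x)=0$ that is bounded at the origin, normalized by $\lim_{x\to0}x^{-m}J_m(x)=2^{-m}\Gamma(m+1)^{-1}$. *)

(* Defs.v *)
From Stdlib Require Import Reals Factorial.
From Coquelicot Require Import Coquelicot.
Open Scope R_scope.

Definition Gamma (s : R) : R :=
  RInt_gen (fun t => Rpower t (s - 1) * exp (- t)) (at_right 0) (Rbar_locally p_infty).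

Definition besselJ (m x : R) : R :=
  Series (fun k : nat =>
    (-1) ^ k / (INR (Factorial.fact k) * Gamma (m + INR k + 1)) * ((x / 2) ^ (2 * k) * Rpower (x / 2) m)).

(* Main.v *)
Require Import Defs.
From Stdlib Require Import Reals Factorial.
From Coquelicot Require Import Coquelicot.
From Stdlib Require Import Lra Lia Classical ZArith.
Open Scope R_scope.

Lemma ball_R (x e y : R) : Rabs (y - x) < e -> ball x e y.
Proof. intros H. exact H. Qed.

Lemma ball_R' (x : R) (e : posreal) (y : R) : ball x e y -> Rabs (y - x) < e.
Proof. intros H. exact H. Qed.

Lemma nat_above (x : R) : exists N : nat, x <= INR N.
Proof.
  destruct (archimed x) as [H1 H2].
  destruct (Z_lt_le_dec (up x) 0) as [Hn|Hp].
  - exists 0%nat. simpl. apply IZR_lt in Hn. lra.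
  - exists (Z.to_nat (up x)). rewrite INR_IZR_INZ, Z2Nat.id by lia. lra.
Qed.

Lemma exp_le (x y : R) : x <= y -> exp x <= exp y.
Proof. intros H. destruct (Req_dec x y) as [->|]; [lra|left; apply exp_increasing; lra]. Qed.

Definition gi (s t : R) := Rpower t (s - 1) * exp (- t).

Lemma gi_derive (s t : R) : 0 < t ->
  is_derive (gi s) t ((s - 1) * Rpower t (s - 1 - 1) * exp (- t) - Rpower t (s - 1) * exp (- t)).
Proof.
  intros Ht. unfold gi.
  apply (is_derive_ext (fun t => Rpower t (s-1) * exp (- t))); [reflexivity|].
  replace ((s - 1) * Rpower t (s - 1 - 1) * exp (- t) - Rpower t (s - 1) * exp (- t))
    with (((s - 1) * Rpower t (s - 1 - 1)) * exp (- t) + Rpower t (s - 1) * (- exp (- t))) by ring.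
  apply (is_derive_mult (fun t => Rpower t (s-1)) (fun t => exp (- t))).
  - apply is_derive_Reals. apply derivable_pt_lim_power. exact Ht.
  - auto_derive; auto; ring.
  - intros; apply Rmult_comm.
Qed.

Lemma gi_cont (s t : R) : 0 < t -> continuous (gi s) t.
Proof. intros Ht. apply (ex_derive_continuous (V := R_NormedModule) (gi s)). eexists. apply gi_derive; exact Ht. Qed.

Lemma gi_pos (s t : R) : 0 < t -> 0 < gi s t.
Proof. intros; unfold gi, Rpower. apply Rmult_lt_0_compat; apply exp_pos. Qed.

Lemma gi_le1 (s t : R) : 1 < s -> 0 < t <= 1 -> gi s t <= 1.
Proof.
  intros Hs Ht. unfold gi, Rpower.
  assert (ln t <= 0). { destruct (Req_dec t 1) as [->|]. rewrite ln_1; lra.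
    left. rewrite <- ln_1. apply ln_increasing; lra. }
  rewrite <- exp_plus. apply Rle_trans with (exp 0); [|rewrite exp_0; lra]. apply exp_le.
  assert (0 <= (s - 1) * - ln t) by (apply Rmult_le_pos; lra). nra.
Qed.

Lemma pow_exp_bound (N : nat) (t : R) : 0 <= t -> t ^ N * exp (- t) <= INR (fact N).
Proof.
  intros Ht.
  assert (H := exp_ge_taylor t N Ht).
  assert (Hl : t ^ N / INR (fact N) <= sum_f_R0 (fun k => t ^ k / INR (fact k)) N).
  { destruct N. simpl. lra. rewrite tech5.
    assert (0 <= sum_f_R0 (fun k => t ^ k / INR (fact k)) N).
    { apply cond_pos_sum. intros n. apply Rmult_le_pos. apply pow_le; lra.
      left; apply Rinv_0_lt_compat, INR_fact_lt_0. }
    lra. }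
  assert (Hf := INR_fact_lt_0 N).
  assert (t ^ N <= INR (fact N) * exp t).
  { apply (Rmult_le_reg_r (/ INR (fact N))). apply Rinv_0_lt_compat; lra.
    replace (INR (fact N) * exp t * / INR (fact N)) with (exp t) by (field; lra).
    unfold Rdiv in Hl. lra. }
  assert (exp t * exp (- t) = 1) by (rewrite <- exp_plus, Rplus_opp_r, exp_0; auto).
  assert (0 < exp (- t)) by apply exp_pos.
  nra.
Qed.

Lemma rpow_exp_bound (s : R) : exists K, 0 < K /\
  forall t, 1 <= t -> Rpower t s * exp (- t) <= K.
Proof.
  destruct (nat_above s) as [N HN].
  exists (INR (fact N)). split. apply INR_fact_lt_0.
  intros t Ht. eapply Rle_trans; [|apply (pow_exp_bound N t); lra].
  rewrite <- Rpower_pow by lra.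
  apply Rmult_le_compat_r. left; apply exp_pos.
  apply Rle_Rpower; lra.
Qed.

Lemma tail_lim (f : R -> R) (a M : R) :
  (forall b, a <= b -> ex_RInt f a b) ->
  (forall x, a <= x -> 0 <= f x) ->
  (forall b, a <= b -> RInt f a b <= M) ->
  exists l, is_RInt_gen f (at_point a) (Rbar_locally p_infty) l /\
            (forall b, a <= b -> RInt f a b <= l).
Proof.
  intros Hex Hpos HM.
  set (E := fun y => exists b, a <= b /\ y = RInt f a b).
  destruct (completeness E) as [l [Hub Hlub]].
  { exists M. intros y [b [Hb ->]]. apply HM; auto. }
  { exists (RInt f a a). exists a. split; [lra|auto]. }
  exists l. split.
  2:{ intros b Hb. apply Hub. exists b; auto. }
  intros P [eps Heps]. unfold filtermapi.
    assert (Hb0 : exists b0, a <= b0 /\ l - eps < RInt f a b0).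
    { apply NNPP; intro Hn.
      assert (is_upper_bound E (l - eps)).
      { intros y [b [Hb ->]]. apply Rnot_lt_le. intro Hlt. apply Hn. exists b. auto. }
      specialize (Hlub _ H). destruct eps; simpl in *; lra. }
    destruct Hb0 as [b0 [Hab0 Hb0]].
    apply Filter_prod with (Q := fun x => x = a) (R := fun y => b0 < y).
    + reflexivity.
    + exists b0. auto.
    + intros x y -> Hy. simpl. exists (RInt f a y). split.
      { apply (RInt_correct (V:=R_CompleteNormedModule)), Hex; lra. }
      apply Heps. apply ball_R.
      assert (RInt f a y <= l) by (apply Hub; exists y; split; auto; lra).
      assert (Hc : RInt f a b0 + RInt f b0 y = RInt f a y).
      { apply (RInt_Chasles f a b0 y). apply Hex; auto.
        apply (ex_RInt_Chasles_2 f a). lra. apply Hex; lra. }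
      assert (0 <= RInt f b0 y).
      { apply RInt_ge_0. lra. apply (ex_RInt_Chasles_2 f a). lra. apply Hex; lra.
        intros; apply Hpos; lra. }
      apply Rabs_def1; lra.
Qed.

Lemma head_lim (f : R -> R) (a M : R) : 0 < a ->
  (forall e, 0 < e <= a -> ex_RInt f e a) ->
  (forall x, 0 < x <= a -> 0 <= f x) ->
  (forall e, 0 < e <= a -> RInt f e a <= M) ->
  exists l, is_RInt_gen f (at_right 0) (at_point a) l /\
            (forall e, 0 < e <= a -> RInt f e a <= l).
Proof.
  intros Ha Hex Hpos HM.
  set (E := fun y => exists e, 0 < e <= a /\ y = RInt f e a).
  destruct (completeness E) as [l [Hub Hlub]].
  { exists M. intros y [b [Hb ->]]. apply HM; auto. }
  { exists (RInt f a a). exists a. split; [lra|auto]. }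
  exists l. split.
  2:{ intros b Hb. apply Hub. exists b; auto. }
  intros P [eps Heps]. unfold filtermapi.
    assert (Hb0 : exists b0, 0 < b0 <= a /\ l - eps < RInt f b0 a).
    { apply NNPP; intro Hn.
      assert (is_upper_bound E (l - eps)).
      { intros y [b [Hb ->]]. apply Rnot_lt_le. intro Hlt. apply Hn. exists b. auto. }
      specialize (Hlub _ H). destruct eps; simpl in *; lra. }
    destruct Hb0 as [b0 [Hab0 Hb0]].
    apply Filter_prod with (Q := fun x => 0 < x <= b0) (R := fun y => y = a).
    + exists (mkposreal b0 (proj1 Hab0)). intros y Hy Hy0. apply ball_R' in Hy. simpl in Hy.
      rewrite Rminus_0_r in Hy. apply Rabs_def2 in Hy. lra.
    + reflexivity.
    + intros x y Hx ->. simpl. exists (RInt f x a). split.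
      { apply (RInt_correct (V:=R_CompleteNormedModule)), Hex; lra. }
      apply Heps. apply ball_R.
      assert (RInt f x a <= l) by (apply Hub; exists x; split; auto; lra).
      assert (Hc : RInt f x b0 + RInt f b0 a = RInt f x a).
      { apply (RInt_Chasles f x b0 a).
        apply (ex_RInt_Chasles_1 f x b0 a). lra. apply Hex; lra.
        apply Hex; lra. }
      assert (0 <= RInt f x b0).
      { apply RInt_ge_0. lra. apply (ex_RInt_Chasles_1 f x b0 a). lra. apply Hex; lra.
        intros; apply Hpos; lra. }
      apply Rabs_def1; lra.
Qed.

Lemma RInt_inv_sq (K b : R) : 1 <= b -> RInt (fun t => K / t ^ 2) 1 b = K - K / b.
Proof.
  intros Hb. apply is_RInt_unique.
  replace (K - K / b) with (minus ((fun t => - K / t) b) ((fun t => - K / t) 1)).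
  2:{ unfold minus, plus, opp; simpl. field. lra. }
  apply (is_RInt_derive (V := R_CompleteNormedModule)).
  - intros x Hx. rewrite Rmin_left in Hx by lra. rewrite Rmax_right in Hx by lra.
    auto_derive. lra. field. lra.
  - intros x Hx. rewrite Rmin_left in Hx by lra. rewrite Rmax_right in Hx by lra.
    apply (ex_derive_continuous (V := R_NormedModule) (fun t => K / t ^ 2)).
    auto_derive. intro; nra.
Qed.

Lemma gamma_ex (s : R) : 1 < s ->
  exists G, is_RInt_gen (gi s) (at_right 0) (Rbar_locally p_infty) G /\ 0 < G.
Proof.
  intros Hs.
  destruct (head_lim (gi s) 1 1) as [l1 [Hl1 Hl1b]].
  - lra.
  - intros e He. apply (ex_RInt_continuous (V := R_CompleteNormedModule)).
    intros z Hz. rewrite Rmin_left in Hz by lra. rewrite Rmax_right in Hz by lra.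
    apply gi_cont. lra.
  - intros x Hx. left. apply gi_pos. lra.
  - intros e He.
    assert (Hex : ex_RInt (gi s) e 1).
    { apply (ex_RInt_continuous (V := R_CompleteNormedModule)).
      intros z Hz. rewrite Rmin_left in Hz by lra. rewrite Rmax_right in Hz by lra.
      apply gi_cont. lra. }
    apply Rle_trans with (RInt (fun _ => 1) e 1).
    + apply RInt_le. lra. exact Hex. apply ex_RInt_const.
      intros x Hx. apply gi_le1; lra.
    + rewrite RInt_const. unfold scal; simpl; unfold mult; simpl. nra.
  - destruct (rpow_exp_bound (s + 1)) as [K [HK HKb]].
    assert (Hbd : forall t, 1 <= t -> gi s t <= K / t ^ 2).
    { intros t Ht. unfold gi.
      assert (Rpower t (s + 1) = Rpower t (s - 1) * t ^ 2).
      { replace (s + 1) with ((s - 1) + INR 2) by (simpl; ring).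
        rewrite Rpower_plus, Rpower_pow by lra. reflexivity. }
      specialize (HKb t Ht). rewrite H in HKb.
      apply (Rmult_le_reg_r (t ^ 2)). nra.
      replace (K / t ^ 2 * t ^ 2) with K by (field; lra). nra. }
    assert (Hexb : forall b, 1 <= b -> ex_RInt (gi s) 1 b).
    { intros b Hb. apply (ex_RInt_continuous (V := R_CompleteNormedModule)).
      intros z Hz. rewrite Rmin_left in Hz by lra. rewrite Rmax_right in Hz by lra.
      apply gi_cont. lra. }
    destruct (tail_lim (gi s) 1 K) as [l2 [Hl2 Hl2b]].
    + exact Hexb.
    + intros x Hx. left. apply gi_pos. lra.
    + intros b Hb. apply Rle_trans with (RInt (fun t => K / t ^ 2) 1 b).
      * apply RInt_le. lra. apply Hexb; lra.
        apply (ex_RInt_continuous (V := R_CompleteNormedModule)).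
        intros z Hz. rewrite Rmin_left in Hz by lra. rewrite Rmax_right in Hz by lra.
        apply (ex_derive_continuous (V := R_NormedModule) (fun t => K / t ^ 2)).
        auto_derive. intro; nra.
        intros x Hx. apply Hbd. lra.
      * rewrite RInt_inv_sq by lra.
        assert (0 < K / b) by (apply Rdiv_lt_0_compat; lra). lra.
    + exists (plus l1 l2). split.
      * apply (is_RInt_gen_Chasles (gi s) 1 l1 l2); assumption.
      * assert (0 < RInt (gi s) 1 2).
        { apply RInt_gt_0. lra. intros x Hx. apply gi_pos. lra.
          intros x Hx. apply gi_cont. lra. }
        assert (RInt (gi s) 1 2 <= l2) by (apply Hl2b; lra).
        assert (RInt (gi s) 1 1 <= l1) by (apply Hl1b; lra).
        rewrite RInt_point in H1. unfold zero in H1; simpl in H1.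
        unfold plus; simpl. lra.
Qed.


Lemma PF0 : ProperFilter' (at_right 0).
Proof. apply Proper_StrongProper, at_right_proper_filter. Qed.
Lemma PFinf : ProperFilter' (Rbar_locally p_infty).
Proof. apply Proper_StrongProper, Rbar_locally_filter. Qed.

Lemma Gamma_is (s G : R) : is_RInt_gen (gi s) (at_right 0) (Rbar_locally p_infty) G -> Gamma s = G.
Proof.
  intros H. unfold Gamma. change (RInt_gen (gi s) (at_right 0) (Rbar_locally p_infty) = G).
  apply (is_RInt_gen_unique (V := R_CompleteNormedModule) (Fa := at_right 0) (Fb := Rbar_locally p_infty) (FFa := PF0) (FFb := PFinf)).
  exact H.
Qed.

Lemma rpow_le_self (a s : R) : 0 < a <= 1 -> 1 <= s -> Rpower a s <= a.
Proof.
  intros Ha Hs. unfold Rpower.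
  assert (ln a <= 0). { destruct (Req_dec a 1) as [->|]. rewrite ln_1; lra.
    left. rewrite <- ln_1. apply ln_increasing; lra. }
  rewrite <- (exp_ln a) at 2 by lra. apply exp_le. nra.
Qed.

Lemma is_derive_eq' (f : R -> R) (x l l' : R) : is_derive f x l -> l = l' -> is_derive f x l'.
Proof. intros H ->. exact H. Qed.

Lemma gamma_rec (s : R) : 1 < s -> Gamma (s + 1) = s * Gamma s /\ 0 < Gamma s.
Proof.
  intros Hs.
  destruct (gamma_ex s Hs) as [G1 [H1 HG1]].
  destruct (gamma_ex (s + 1)) as [G2 [H2 HG2]]. lra.
  rewrite (Gamma_is s G1 H1), (Gamma_is (s+1) G2 H2). split; [|exact HG1].
  set (F := fun t => Rpower t s * exp (- t)).
  set (df := fun t => s * gi s t - gi (s + 1) t).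
  assert (HF : forall t, 0 < t -> is_derive F t (df t)).
  { intros t Ht. unfold F, df, gi. replace (s + 1 - 1) with s by ring.
    apply (is_derive_ext (fun t => Rpower t s * exp (- t))); [reflexivity|].
    eapply is_derive_eq'.
    apply (is_derive_mult (fun t => Rpower t s) (fun t => exp (- t))).
    - apply is_derive_Reals. apply derivable_pt_lim_power. exact Ht.
    - auto_derive; auto; ring.
    - intros; apply Rmult_comm.
    - unfold opp, plus, mult; simpl. match goal with |- ?a = ?b => change (@eq R a b) end; ring. }
  assert (Hdc : forall t, 0 < t -> continuous df t).
  { intros t Ht. apply (ex_derive_continuous (V := R_NormedModule) df).
    unfold df. apply (ex_derive_minus (fun t => s * gi s t) (gi (s + 1))).
    - apply (ex_derive_scal (gi s)). eexists; apply gi_derive; lra.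
    - eexists; apply gi_derive; lra. }
  assert (H0 : is_RInt_gen df (at_right 0) (Rbar_locally p_infty) 0).
  { intros P [eps Heps]. unfold filtermapi.
    destruct (rpow_exp_bound (s + 1)) as [K [HK HKb]].
    set (a0 := Rmin 1 (eps / 2)).
    set (b0 := Rmax 1 (2 * K / eps)).
    assert (Ha0 : 0 < a0) by (apply Rmin_glb_lt; destruct eps; simpl; lra).
    apply Filter_prod with (Q := fun x => 0 < x < a0) (R := fun y => b0 < y).
    - exists (mkposreal a0 Ha0). intros y Hy Hy0. apply ball_R' in Hy. simpl in Hy.
      rewrite Rminus_0_r in Hy. apply Rabs_def2 in Hy. lra.
    - exists b0. auto.
    - intros x y Hx Hy. simpl.
      assert (Hb1 : 1 <= b0) by apply Rmax_l.
      assert (Hb2 : 2 * K / eps <= b0) by apply Rmax_r.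
      assert (Ha1 : a0 <= 1) by apply Rmin_l.
      assert (Ha2 : a0 <= eps / 2) by apply Rmin_r.
      exists (F y - F x). split.
      + apply (is_RInt_derive (V := R_CompleteNormedModule) F df).
        * intros z Hz. apply HF. assert (0 < Rmin x y) by (apply Rmin_glb_lt; lra). lra.
        * intros z Hz. apply Hdc. assert (0 < Rmin x y) by (apply Rmin_glb_lt; lra). lra.
      + apply Heps. apply ball_R. rewrite Rminus_0_r.
        assert (HFx : Rabs (F x) < eps / 2).
        { unfold F. rewrite Rabs_pos_eq.
          2:{ apply Rmult_le_pos; left; [unfold Rpower|]; apply exp_pos. }
          assert (Rpower x s <= x) by (apply rpow_le_self; lra).
          assert (exp (- x) <= 1) by (rewrite <- exp_0; apply exp_le; lra).
          assert (0 < Rpower x s) by (unfold Rpower; apply exp_pos).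
          nra. }
        assert (HFy : Rabs (F y) < eps / 2).
        { unfold F. rewrite Rabs_pos_eq.
          2:{ apply Rmult_le_pos; left; [unfold Rpower|]; apply exp_pos. }
          specialize (HKb y ltac:(lra)).
          rewrite Rpower_plus, Rpower_1 in HKb by lra.
          assert (Hyp : 0 < y) by lra.
          assert (Hk : Rpower y s * exp (- y) <= K / y).
          { apply (Rmult_le_reg_r y). lra. replace (K / y * y) with K by (field; lra). nra. }
          assert (K / y < eps / 2).
          { destruct eps as [e He]; simpl in *.
            apply (Rmult_lt_reg_r y). lra. replace (K / y * y) with K by (field; lra).
            assert (2 * K / e * e = 2 * K) by (field; lra). nra. }
          lra. }
        assert (Rabs (F y - F x) <= Rabs (F y) + Rabs (F x)).
        { unfold Rminus. eapply Rle_trans. apply Rabs_triang. rewrite Rabs_Ropp. lra. }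
        lra. }
  assert (H3 := is_RInt_gen_minus _ _ _ _ (is_RInt_gen_scal _ s _ H1) H2).
  assert (E1 := is_RInt_gen_unique (V := R_CompleteNormedModule) (FFa := PF0) (FFb := PFinf) _ _ H0).
  assert (E2 := is_RInt_gen_unique (V := R_CompleteNormedModule) (FFa := PF0) (FFb := PFinf) _ _ H3).
  change (RInt_gen df (at_right 0) (Rbar_locally p_infty) = s * G1 - G2) in E2.
  rewrite E1 in E2. lra.
Qed.

Definition ca (m : R) (k : nat) : R :=
  (-1) ^ k / (INR (fact k) * Gamma (m + INR k + 1)).

Lemma Gamma_pos_k (m : R) (k : nat) : 0 < m -> 0 < Gamma (m + INR k + 1).
Proof. intros Hm. apply gamma_rec. assert (0 <= INR k) by apply pos_INR. lra. Qed.

Lemma ca_nz (m : R) (k : nat) : 0 < m -> ca m k <> 0.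
Proof.
  intros Hm. unfold ca. assert (H := Gamma_pos_k m k Hm). assert (H2 := INR_fact_lt_0 k).
  apply Rmult_integral_contrapositive_currified.
  apply pow_nonzero; lra. apply Rinv_neq_0_compat. nra.
Qed.



Lemma ca_rec (m : R) (k : nat) : 0 < m ->
  ca m (S k) = - ca m k / ((INR k + 1) * (m + INR k + 1)).
Proof.
  intros Hm. unfold ca.
  rewrite S_INR.
  replace (m + (INR k + 1) + 1) with ((m + INR k + 1) + 1) by ring.
  assert (Hk : 0 <= INR k) by apply pos_INR.
  destruct (gamma_rec (m + INR k + 1)) as [HG HGp]. lra.
  rewrite HG.
  change (fact (S k)) with (S k * fact k)%nat. rewrite mult_INR, S_INR.
  assert (H2 := INR_fact_lt_0 k).
  simpl. field. repeat split; lra.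
Qed.

Lemma ca_radius (m : R) : 0 < m -> CV_radius (ca m) = p_infty.
Proof.
  intros Hm. apply CV_radius_infinite_DAlembert.
  - intros n. apply ca_nz; auto.
  - apply (is_lim_seq_le_le (fun _ => 0) _ (fun n => / INR (S n))).
    + intros n. rewrite ca_rec by auto.
      assert (Hn : 0 <= INR n) by apply pos_INR.
      assert (Hc := ca_nz m n Hm).
      replace (- ca m n / ((INR n + 1) * (m + INR n + 1)) / ca m n)
        with (- / ((INR n + 1) * (m + INR n + 1))) by (field; repeat split; lra).
      rewrite Rabs_Ropp, Rabs_pos_eq.
      2:{ left. apply Rinv_0_lt_compat. nra. }
      split. left. apply Rinv_0_lt_compat. nra.
      rewrite S_INR. apply Rinv_le_contravar. lra. nra.
    + apply is_lim_seq_const.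
    + replace (Finite 0) with (Rbar_inv p_infty) by reflexivity.
      apply is_lim_seq_inv.
      apply (is_lim_seq_incr_1 INR p_infty). apply is_lim_seq_INR.
      discriminate.
Qed.

Definition P (m z : R) := PSeries (ca m) z.
Definition P1 (m z : R) := PSeries (PS_derive (ca m)) z.
Definition P2 (m z : R) := PSeries (PS_derive (PS_derive (ca m))) z.

Lemma P_derive (m z : R) : 0 < m -> is_derive (P m) z (P1 m z).
Proof.
  intros Hm. unfold P, P1. apply is_derive_PSeries. rewrite ca_radius; auto. exact I.
Qed.

Lemma P1_derive (m z : R) : 0 < m -> is_derive (P1 m) z (P2 m z).
Proof.
  intros Hm. unfold P1, P2. apply is_derive_PSeries. rewrite CV_radius_derive, ca_radius; auto. exact I.
Qed.

Lemma P_ode (m z : R) : 0 < m -> z * P2 m z + (m + 1) * P1 m z + P m z = 0.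
Proof.
  intros Hm.
  set (a := ca m). set (c := PS_derive a). set (b := PS_derive c).
  assert (Ha : is_pseries a z (P m z)).
  { apply PSeries_correct, CV_radius_inside. unfold a; rewrite ca_radius; auto. exact I. }
  assert (Hc : is_pseries c z (P1 m z)).
  { apply PSeries_correct, CV_radius_inside. unfold c, a; rewrite CV_radius_derive, ca_radius; auto. exact I. }
  assert (Hb : is_pseries b z (P2 m z)).
  { apply PSeries_correct, CV_radius_inside. unfold b, c, a; rewrite !CV_radius_derive, ca_radius; auto. exact I. }
  assert (H := is_pseries_plus _ _ _ _ _ (is_pseries_plus _ _ _ _ _ (is_pseries_incr_1 _ _ _ Hb)
     (is_pseries_scal (m + 1) _ _ _ (Rmult_comm _ _) Hc)) Ha).
  assert (H0 : is_pseries (fun _ => 0) z (z * P2 m z + (m + 1) * P1 m z + P m z)).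
  { eapply is_pseries_ext; [|exact H].
    intros n. unfold PS_plus, PS_scal, PS_incr_1, b, c, PS_derive, a.
    destruct n as [|k].
    - rewrite ca_rec by auto. unfold plus, scal, zero; simpl. unfold mult; simpl.
      field. lra.
    - rewrite (ca_rec m (S k)) by auto. rewrite !S_INR. unfold plus, scal; simpl. unfold mult; simpl.
      assert (Hk : 0 <= INR k) by apply pos_INR.
      field. split; lra. }
  apply is_pseries_unique in H0. rewrite PSeries_const_0 in H0. auto.
Qed.

Lemma besselJ_P (m x : R) : besselJ m x = Rpower (x / 2) m * P m ((x / 2) ^ 2).
Proof.
  unfold besselJ, P, PSeries.
  rewrite Rmult_comm, <- Series_scal_r. apply Series_ext. intros k.
  unfold ca. rewrite pow_mult. ring.
Qed.

Definition rr (m z : R) := sqrt (m * m - 4 * z).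
Definition qq (m z : R) := 4 / (m + rr m z).
Definition HH (m z : R) := 2 * P1 m z + qq m z * P m z.
Definition dqq (m z : R) := 8 / (rr m z * (m + rr m z) ^ 2).
Definition dHH (m z : R) := 2 * P2 m z + dqq m z * P m z + qq m z * P1 m z.

Lemma rr_pos (m z : R) : 4 * z < m * m -> 0 < rr m z.
Proof. intros H. unfold rr. apply sqrt_lt_R0. lra. Qed.

Lemma rr_sq (m z : R) : 4 * z < m * m -> rr m z * rr m z = m * m - 4 * z.
Proof. intros H. unfold rr. apply sqrt_sqrt. lra. Qed.

Lemma rr_le (m z : R) : 0 < m -> 0 <= z -> 4 * z < m * m -> rr m z <= m.
Proof.
  intros Hm Hz H. assert (H1 := rr_sq m z H). assert (H2 := rr_pos m z H). nra.
Qed.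

Lemma qq_derive (m z : R) : 0 < m -> 4 * z < m * m -> is_derive (qq m) z (dqq m z).
Proof.
  intros Hm H. assert (H1 := rr_sq m z H). assert (H2 := rr_pos m z H).
  unfold qq, dqq, rr in *. unfold Rminus in *. auto_derive.
  - split; [lra | split; [intro; nra | exact I]].
  - field. split; nra.
Qed.

Lemma HH_derive (m z : R) : 0 < m -> 4 * z < m * m -> is_derive (HH m) z (dHH m z).
Proof.
  intros Hm H. unfold HH, dHH.
  eapply is_derive_eq'.
  apply (is_derive_plus (fun z => 2 * P1 m z) (fun z => qq m z * P m z)).
  apply (is_derive_scal (P1 m)). apply P1_derive; auto.
  apply (is_derive_mult (qq m) (P m)). apply qq_derive; auto. apply P_derive; auto.
  intros; apply Rmult_comm.
  unfold plus, scal, mult; simpl. unfold mult; simpl. ring.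
Qed.

Lemma HH_ode (m z : R) : 0 < m -> 4 * z < m * m ->
  z * dHH m z = - ((m + rr m z) / 2 + 1) * HH m z + 2 * P m z / rr m z.
Proof.
  intros Hm H. assert (H1 := rr_sq m z H). assert (H2 := rr_pos m z H).
  assert (Hode := P_ode m z Hm).
  unfold dHH, HH, dqq, qq.
  set (r := rr m z) in *. set (A := P m z) in *. set (B := P1 m z) in *. set (C := P2 m z) in *.
  replace (z * (2 * C + 8 / (r * (m + r) ^ 2) * A + 4 / (m + r) * B))
    with (2 * (z * C) + z * (8 / (r * (m + r) ^ 2) * A + 4 / (m + r) * B)) by ring.
  replace (z * C) with (- (m + 1) * B - A) by lra.
  assert (Hz : z = (m * m - r * r) / 4) by lra.
  rewrite Hz. field. split; lra.
Qed.

Lemma cont_pos (f : R -> R) (x : R) : continuous f x -> 0 < f x ->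
  exists d, 0 < d /\ forall y, Rabs (y - x) < d -> 0 < f y.
Proof.
  intros Hc Hp.
  assert (Hl : locally (f x) (fun y => 0 < y)).
  { exists (mkposreal (f x) Hp). intros y Hy. apply ball_R' in Hy. simpl in Hy.
    apply Rabs_def2 in Hy. lra. }
  destruct (Hc _ Hl) as [eps Heps].
  exists eps. split. apply cond_pos. intros y Hy. apply Heps. apply ball_R. exact Hy.
Qed.

Lemma cont_neg (f : R -> R) (x : R) : continuous f x -> f x < 0 ->
  exists d, 0 < d /\ forall y, Rabs (y - x) < d -> f y < 0.
Proof.
  intros Hc Hp.
  assert (Hp' : 0 < - f x) by lra.
  assert (Hl : locally (f x) (fun y => y < 0)).
  { exists (mkposreal (- f x) Hp'). intros y Hy. apply ball_R' in Hy. simpl in Hy.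
    apply Rabs_def2 in Hy. lra. }
  destruct (Hc _ Hl) as [eps Heps].
  exists eps. split. apply cond_pos. intros y Hy. apply Heps. apply ball_R. exact Hy.
Qed.

Lemma P_cont (m z : R) : 0 < m -> continuous (P m) z.
Proof. intros. apply (ex_derive_continuous (V := R_NormedModule) (P m)). eexists; apply P_derive; auto. Qed.

Lemma HH_cont (m z : R) : 0 < m -> 4 * z < m * m -> continuous (HH m) z.
Proof. intros. apply (ex_derive_continuous (V := R_NormedModule) (HH m)). eexists; apply HH_derive; auto. Qed.

Lemma mono_nonneg (f df : R -> R) (a b : R) : a <= b ->
  (forall x, a <= x <= b -> is_derive f x (df x)) ->
  (forall x, a <= x <= b -> 0 <= df x) -> f a <= f b.
Proof.
  intros Hab Hd Hdf.
  destruct (MVT_gen f a b df) as [c [Hc Heq]].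
  - intros x Hx. rewrite Rmin_left, Rmax_right in Hx by lra. apply Hd; lra.
  - intros x Hx. rewrite Rmin_left, Rmax_right in Hx by lra.
    apply continuity_pt_filterlim. apply (ex_derive_continuous (V := R_NormedModule) f).
    eexists; apply Hd; lra.
  - rewrite Rmin_left, Rmax_right in Hc by lra.
    assert (0 <= df c) by (apply Hdf; lra). nra.
Qed.

Lemma ca0_pos (m : R) : 0 < m -> 0 < ca m 0.
Proof.
  intros Hm. assert (H := Gamma_pos_k m 0 Hm). unfold ca. simpl.
  simpl in H. apply Rdiv_lt_0_compat; lra.
Qed.

Lemma P_0 (m : R) : P m 0 = ca m 0.
Proof. unfold P. apply PSeries_0. Qed.

Lemma HH_0_pos (m : R) : 0 < m -> 0 < HH m 0.
Proof.
  intros Hm. assert (Hc := ca0_pos m Hm).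
  unfold HH, qq, rr, P1. rewrite P_0, PSeries_0. unfold PS_derive.
  rewrite ca_rec by auto.
  replace (m * m - 4 * 0) with (m * m) by ring. rewrite sqrt_square by lra.
  simpl. replace (2 * (1 * (- ca m 0 / ((0 + 1) * (m + 0 + 1)))) + 4 / (m + m) * ca m 0)
    with (2 * ca m 0 / (m * (m + 1))) by (field; lra).
  apply Rdiv_lt_0_compat. lra. nra.
Qed.

Lemma qq_bound (m z : R) : 0 < m -> 4 * z < m * m -> 0 < qq m z <= 4 / m.
Proof.
  intros Hm H. assert (Hr := rr_pos m z H). unfold qq. split.
  apply Rdiv_lt_0_compat; lra.
  unfold Rdiv. apply Rmult_le_compat_l. lra. apply Rinv_le_contravar; lra.
Qed.

Lemma PH_pos (m z1 Z : R) : 0 < m -> 0 < z1 -> z1 <= Z -> 4 * Z < m * m ->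
  forall z, z1 <= z <= Z -> 0 < P m z /\ 0 < HH m z.
Proof.
  intros Hm Hz1 HZ1 HZ.
  destruct (cont_pos (P m) 0 (P_cont m 0 Hm)) as [d1 [Hd1 HPd]].
  { rewrite P_0. apply ca0_pos; auto. }
  destruct (cont_pos (HH m) 0 (HH_cont m 0 Hm ltac:(nra))) as [d2 [Hd2 HHd]].
  { apply HH_0_pos; auto. }
  set (z0 := Rmin z1 (Rmin d1 d2 / 2)).
  assert (Hz0a : z0 <= z1) by apply Rmin_l.
  assert (Hz0b : z0 <= Rmin d1 d2 / 2) by apply Rmin_r.
  assert (Hmd1 : Rmin d1 d2 <= d1) by apply Rmin_l.
  assert (Hmd2 : Rmin d1 d2 <= d2) by apply Rmin_r.
  assert (Hmd : 0 < Rmin d1 d2) by (apply Rmin_glb_lt; lra).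
  assert (Hz0 : 0 < z0) by (apply Rmin_glb_lt; lra).
  assert (HP0 : 0 < P m z0) by (apply HPd; rewrite Rminus_0_r, Rabs_pos_eq; lra).
  assert (HH0 : 0 < HH m z0) by (apply HHd; rewrite Rminus_0_r, Rabs_pos_eq; lra).
  set (L := 2 / m + (m + 1) / z0).
  assert (HL1 : 2 / m <= L).
  { unfold L. assert (0 < (m + 1) / z0) by (apply Rdiv_lt_0_compat; lra). lra. }
  assert (HL2 : forall u, z0 <= u -> m + 1 <= u * L).
  { intros u Hu. unfold L.
    assert (0 < 2 / m) by (apply Rdiv_lt_0_compat; lra).
    assert (z0 * ((m + 1) / z0) = m + 1) by (field; lra).
    assert (0 < (m + 1) / z0) by (apply Rdiv_lt_0_compat; lra). nra. }
  assert (Mono : forall t, z0 <= t <= Z -> (forall s, z0 <= s <= t -> 0 <= P m s /\ 0 <= HH m s) ->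
            P m z0 * exp (L * z0) <= P m t * exp (L * t) /\
            HH m z0 * exp (L * z0) <= HH m t * exp (L * t)).
  { intros t Ht Hnn. split.
    - apply (mono_nonneg (fun u => P m u * exp (L * u))
               (fun u => P1 m u * exp (L * u) + P m u * (L * exp (L * u)))). lra.
      + intros x Hx. apply (is_derive_mult (P m) (fun u => exp (L * u))).
        apply P_derive; auto. auto_derive; auto; ring. intros; apply Rmult_comm.
      + intros x Hx. destruct (Hnn x Hx) as [Hp Hh].
        assert (Hx4 : 4 * x < m * m) by lra.
        destruct (qq_bound m x Hm Hx4) as [Hq1 Hq2].
        assert (Hd : P1 m x = (HH m x - qq m x * P m x) / 2) by (unfold HH; field).
        assert (HE := exp_pos (L * x)).
        assert (0 <= (L - qq m x / 2) * P m x) by (apply Rmult_le_pos; lra).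
        rewrite Hd.
        replace ((HH m x - qq m x * P m x) / 2 * exp (L * x) + P m x * (L * exp (L * x)))
          with (exp (L * x) * (HH m x / 2 + (L - qq m x / 2) * P m x)) by field.
        apply Rmult_le_pos; lra.
    - apply (mono_nonneg (fun u => HH m u * exp (L * u))
               (fun u => dHH m u * exp (L * u) + HH m u * (L * exp (L * u)))). lra.
      + intros x Hx. apply (is_derive_mult (HH m) (fun u => exp (L * u))).
        apply HH_derive; auto; lra. auto_derive; auto; ring. intros; apply Rmult_comm.
      + intros x Hx. destruct (Hnn x Hx) as [Hp Hh].
        assert (Hx4 : 4 * x < m * m) by lra.
        assert (Hr := rr_pos m x Hx4). assert (Hr2 := rr_le m x Hm ltac:(lra) Hx4).
        assert (Hode := HH_ode m x Hm Hx4).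
        assert (HE := exp_pos (L * x)).
        assert (Hx0 : 0 < x) by lra.
        assert (HxL := HL2 x ltac:(lra)).
        assert (H2P : 0 <= 2 * P m x / rr m x) by (apply Rmult_le_pos; [lra|left; apply Rinv_0_lt_compat; lra]).
        assert (Hkey : 0 <= x * (dHH m x + L * HH m x)).
        { rewrite Rmult_plus_distr_l, Hode.
          assert (0 <= (x * L - ((m + rr m x) / 2 + 1)) * HH m x) by (apply Rmult_le_pos; lra).
          nra. }
        assert (0 <= dHH m x + L * HH m x).
        { apply (Rmult_le_reg_l x). lra. lra. }
        replace (dHH m x * exp (L * x) + HH m x * (L * exp (L * x)))
          with (exp (L * x) * (dHH m x + L * HH m x)) by ring.
        apply Rmult_le_pos; lra. }
  set (G := fun t => forall s, z0 <= s <= t -> 0 < P m s /\ 0 < HH m s).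
  set (S := fun t => z0 <= t <= Z /\ G t).
  destruct (completeness S) as [T [HTub HTlub]].
  { exists Z. intros t [Ht _]. lra. }
  { exists z0. split. lra. intros s Hs. replace s with z0 by lra. auto. }
  assert (HT1 : z0 <= T).
  { apply HTub. split. lra. intros s Hs. replace s with z0 by lra. auto. }
  assert (HT2 : T <= Z).
  { apply HTlub. intros t [Ht _]. lra. }
  assert (ClA : forall s, z0 <= s < T -> 0 < P m s /\ 0 < HH m s).
  { intros s Hs. apply NNPP. intro Hn.
    assert (is_upper_bound S s).
    { intros t [Ht Gt]. apply Rnot_lt_le. intro Hst. apply Hn. apply Gt. lra. }
    specialize (HTlub s H). lra. }
  assert (HT4 : 4 * T < m * m) by lra.
  assert (ClB : 0 <= P m T /\ 0 <= HH m T).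
  { destruct (Req_dec T z0) as [->|HTne]. split; lra.
    split.
    - apply Rnot_lt_le. intro Hneg.
      destruct (cont_neg (P m) T (P_cont m T Hm) Hneg) as [d [Hd Hdn]].
      set (y := Rmax z0 (T - d / 2)).
      assert (y < T) by (apply Rmax_lub_lt; lra).
      assert (z0 <= y) by apply Rmax_l. assert (T - d / 2 <= y) by apply Rmax_r.
      assert (P m y < 0) by (apply Hdn; rewrite Rabs_left by lra; lra).
      destruct (ClA y). lra. lra.
    - apply Rnot_lt_le. intro Hneg.
      destruct (cont_neg (HH m) T (HH_cont m T Hm HT4) Hneg) as [d [Hd Hdn]].
      set (y := Rmax z0 (T - d / 2)).
      assert (y < T) by (apply Rmax_lub_lt; lra).
      assert (z0 <= y) by apply Rmax_l. assert (T - d / 2 <= y) by apply Rmax_r.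
      assert (HH m y < 0) by (apply Hdn; rewrite Rabs_left by lra; lra).
      destruct (ClA y). lra. lra. }
  assert (ClC : G T).
  { assert (Hnn : forall s, z0 <= s <= T -> 0 <= P m s /\ 0 <= HH m s).
    { intros s Hs. destruct (Req_dec s T) as [->|]. exact ClB.
      destruct (ClA s). lra. split; lra. }
    destruct (Mono T ltac:(lra) Hnn) as [M1 M2].
    assert (HE0 := exp_pos (L * z0)). assert (HET := exp_pos (L * T)).
    assert (0 < P m T * exp (L * T)) by nra.
    assert (0 < HH m T * exp (L * T)) by nra.
    intros s Hs. destruct (Req_dec s T) as [->|].
    - split; nra.
    - apply ClA. lra. }
  assert (ClD : T = Z).
  { destruct (Req_dec T Z) as [|HTZ]; auto. exfalso.
    destruct (ClC T) as [HPT HHT]. lra.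
    destruct (cont_pos (P m) T (P_cont m T Hm) HPT) as [d1' [Hd1' Hp1]].
    destruct (cont_pos (HH m) T (HH_cont m T Hm HT4) HHT) as [d2' [Hd2' Hp2]].
    set (t' := Rmin Z (T + Rmin d1' d2' / 2)).
    assert (0 < Rmin d1' d2') by (apply Rmin_glb_lt; lra).
    assert (Rmin d1' d2' <= d1') by apply Rmin_l. assert (Rmin d1' d2' <= d2') by apply Rmin_r.
    assert (t' <= Z) by apply Rmin_l. assert (t' <= T + Rmin d1' d2' / 2) by apply Rmin_r.
    assert (T < t') by (apply Rmin_glb_lt; lra).
    assert (HSt : S t').
    { split. lra. intros s Hs. destruct (Rle_dec s T).
      - apply ClC. lra.
      - split. apply Hp1. rewrite Rabs_pos_eq; lra. apply Hp2. rewrite Rabs_pos_eq; lra. }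
    specialize (HTub t' HSt). lra. }
  intros z Hz. apply ClC. lra.
Qed.

Theorem mainTheorem1 (gamma delta : R) :
  0 < gamma -> gamma < delta -> delta < 1 ->
  exists C : R, 0 < C /\
    forall m : R, 0 < m ->
      besselJ m (gamma * m) <
      C * Rpower (gamma / delta) (sqrt (1 - delta ^ 2) * m) * besselJ m (delta * m).
Proof.
  intros Hg Hgd Hd1. exists 2. split. lra.
  intros m Hm.
  set (beta := sqrt (1 - delta ^ 2)).
  assert (Hb0 : 0 <= beta) by apply sqrt_pos.
  assert (Hb2 : beta * beta = 1 - delta ^ 2) by (apply sqrt_sqrt; nra).
  assert (Hb1 : beta <= 1) by nra.
  set (a1 := gamma * m / 2). set (a2 := delta * m / 2).
  assert (Ha1 : 0 < a1) by (unfold a1; nra).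
  assert (Ha2 : 0 < a2) by (unfold a2; nra).
  assert (Ha12 : a1 < a2) by (unfold a1, a2; nra).
  set (z1 := a1 ^ 2). set (z2 := a2 ^ 2).
  assert (Hz1 : 0 < z1) by (unfold z1; nra).
  assert (Hz12 : z1 <= z2) by (unfold z1, z2; nra).
  assert (Hz2e : 4 * z2 = delta * delta * (m * m)) by (unfold z2, a2; field).
  assert (Hz2m : 4 * z2 < m * m).
  { assert (0 < (1 - delta * delta) * (m * m)) by (apply Rmult_lt_0_compat; nra). nra. }
  assert (Hpos := PH_pos m z1 z2 Hm Hz1 Hz12 Hz2m).
  set (k := (1 - beta) * m / 2).
  assert (Hk : 0 <= k) by (unfold k; nra).
  assert (HPhi : exp (k * ln z1) * P m z1 <= exp (k * ln z2) * P m z2).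
  { apply (mono_nonneg (fun z => exp (k * ln z) * P m z)
             (fun z => exp (k * ln z) * (k * / z) * P m z + exp (k * ln z) * P1 m z)).
    lra.
    - intros x Hx. apply (is_derive_mult (fun z => exp (k * ln z)) (P m)).
      + auto_derive. lra. ring.
      + apply P_derive; auto.
      + intros; apply Rmult_comm.
    - intros x Hx. destruct (Hpos x Hx) as [HP HH_].
      assert (Hx4 : 4 * x < m * m) by lra.
      assert (Hr := rr_pos m x Hx4). assert (Hr2 := rr_sq m x Hx4).
      assert (Hx0 : 0 < x) by lra.
      assert (Hrb : beta * m <= rr m x).
      { assert (4 * x <= delta ^ 2 * m * m) by (simpl; lra).
        assert (0 <= beta * m) by nra.
        nra. }
      assert (Hid : 2 * (k * P m x + x * P1 m x) = x * HH m x + (rr m x - beta * m) * P m x).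
      { unfold HH, qq, k.
        assert (Hxr : x = (m * m - rr m x * rr m x) / 4) by lra.
        set (r := rr m x) in *. set (A := P m x) in *. set (B := P1 m x) in *.
        rewrite Hxr. field. lra. }
      assert (0 <= k * P m x + x * P1 m x).
      { assert (0 <= x * HH m x) by nra.
        assert (0 <= (rr m x - beta * m) * P m x) by (apply Rmult_le_pos; lra). lra. }
      assert (HE := exp_pos (k * ln x)).
      replace (exp (k * ln x) * (k * / x) * P m x + exp (k * ln x) * P1 m x)
        with (exp (k * ln x) * / x * (k * P m x + x * P1 m x)) by (field; lra).
      apply Rmult_le_pos; [|lra]. apply Rmult_le_pos. lra. left; apply Rinv_0_lt_compat; lra. }
  destruct (Hpos z2) as [HP2 _]. lra.
  rewrite !besselJ_P.
  replace (gamma * m / 2) with a1 by reflexivity.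
  replace (delta * m / 2) with a2 by reflexivity.
  fold z1 z2.
  set (u := ln a1). set (v := ln a2).
  assert (Hl1 : ln z1 = 2 * u) by (unfold z1, u; rewrite ln_pow by lra; simpl; ring).
  assert (Hl2 : ln z2 = 2 * v) by (unfold z2, v; rewrite ln_pow by lra; simpl; ring).
  rewrite Hl1, Hl2 in HPhi.
  assert (Hgdl : ln (gamma / delta) = u - v).
  { unfold u, v. replace (gamma / delta) with (a1 / a2) by (unfold a1, a2; field; lra).
    apply ln_div; lra. }
  unfold Rpower. rewrite Hgdl. fold u v.
  set (Q1 := P m z1) in *. set (Q2 := P m z2) in *.
  assert (E1 : exp (m * u) = exp (m * u - k * (2 * u)) * exp (k * (2 * u))).
  { rewrite <- exp_plus. f_equal. ring. }
  assert (E2 : exp (m * u - k * (2 * u)) * exp (k * (2 * v)) = exp (beta * m * (u - v)) * exp (m * v)).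
  { rewrite <- !exp_plus. f_equal. unfold k. field. }
  assert (HE := exp_pos (m * u - k * (2 * u))).
  assert (Hle : exp (m * u) * Q1 <= exp (beta * m * (u - v)) * exp (m * v) * Q2).
  { rewrite E1, <- E2. 
    replace (exp (m * u - k * (2 * u)) * exp (k * (2 * u)) * Q1)
      with (exp (m * u - k * (2 * u)) * (exp (k * (2 * u)) * Q1)) by ring.
    replace (exp (m * u - k * (2 * u)) * exp (k * (2 * v)) * Q2)
      with (exp (m * u - k * (2 * u)) * (exp (k * (2 * v)) * Q2)) by ring.
    apply Rmult_le_compat_l; lra. }
  assert (0 < exp (beta * m * (u - v)) * exp (m * v) * Q2).
  { assert (H1 := exp_pos (beta * m * (u - v))). assert (H2 := exp_pos (m * v)).
    apply Rmult_lt_0_compat; [apply Rmult_lt_0_compat|]; lra. }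
  replace (2 * exp (beta * m * (u - v)) * (exp (m * v) * Q2))
    with (2 * (exp (beta * m * (u - v)) * exp (m * v) * Q2)) by ring.
  lra.
Qed.
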